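(* For every $n\ge1$, every extended irregular dominating set of the path $P_n$ has at least $\lceil (n+1)/2\rceil$ vertices; that is, $\gamma_e(P_n)\ge\lceil (n+1)/2\rceil$.
   Context: $P_n$ is the path on $n$ vertices $[x_1,\dots,x_n]$ with edges $\{x_i,x_{i+1}\}$. In a finite simple graph $\Gamma=(V,E)$ with distance $d$, a vertex $v$ carrying a non-negative integer label $\ell$ dominates (covers) exactly the vertices $u$ with $d(u,v)=\ell$; a vertex labeled $0$ dominates only itself. An extended irregular dominating set is a set $S\subseteq V$ with a labeling $\lambda:S\to\mathbb{Z}_{\ge0}$ with distinct labels on distinct vertices, such that every vertex of $V$ is dominated by some vertex of $S$; some vertex of $S$ has label $0$. $\gamma_e(\Gamma)$ denotes the minimum cardinality of an extended irregular dominating set of $\Gamma$. *)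

(* Defs.v *)
From mathcomp Require Import all_boot all_order.
Set Implicit Arguments. Unset Strict Implicit. Unset Printing Implicit Defensive.

(* Vertices of P_n are 'I_n (x_1..x_n as 0..n-1), edges {i, i+1}.
   The graph distance in P_n between i and j is |i - j| = (i - j) + (j - i) with truncated subtraction. *)
Definition path_dist (n : nat) (i j : 'I_n) : nat := ((i : nat) - j) + ((j : nat) - i).

Definition ext_irr_dom (V : finType) (d : V -> V -> nat)
    (S : {set V}) (lam : V -> nat) : Prop :=
  {in S &, injective lam} /\
  (forall u : V, exists2 v, v \in S & d u v = lam v) /\
  (exists2 v, v \in S & lam v = 0).

(* Main.v *)
Require Import Defs.
From mathcomp Require Import all_boot all_order.
From mathcomp Require Import zify.

(* ceil((n+1)/2) = (n+2) %/ 2 *)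
Theorem lemma5p6 (n : nat) (S : {set 'I_n}) (lam : 'I_n -> nat) :
  1 <= n -> ext_irr_dom (@path_dist n) S lam -> (n.+2) %/ 2 <= #|S|.
Proof.
move=> n1 [inj [dom [v0 v0S l0]]].
pose pv (u : 'I_n) := odflt u [pick v in S | path_dist u v == lam v].
have pvP : forall u, pv u \in S /\ path_dist u (pv u) = lam (pv u).
  move=> u; rewrite /pv; case: pickP => [v /andP [vS /eqP e] | H] //=.
  by case: (dom u) => v vS e; move: (H v); rewrite vS e eqxx.
pose g (u : 'I_n) := (pv u, (pv u < u)%N).
have ginj : injective g.
  move=> u w [e1 e2].
  have [Su du] := pvP u; have [Sw dw] := pvP w.
  rewrite -e1 in dw e2; move: du dw e2; rewrite /path_dist.
  move=> du dw e2; apply/val_inj => /=.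
  case: (ltnP (pv u) u) e2 du dw => h e2 du dw;
  move: e2; case: (ltnP (pv u) w) => //= h' _; lia.
have sub : g @: [set: 'I_n] \subset (setX S [set: bool]) :\ (v0, true).
  apply/subsetP => _ /imsetP [u _ ->]; rewrite !inE /g /=.
  have [Su du] := pvP u; rewrite Su andbT.
  rewrite andbT xpair_eqE; apply/negP => /andP [/eqP e /eqP b].
  move: du; rewrite e l0 /path_dist; move: b; rewrite e; lia.
have := subset_leq_card sub.
rewrite card_imset // cardsT card_ord.
have := cardsD1 (v0, true) (setX S [set: bool]).
rewrite cardsX cardsT card_bool !inE v0S /=.
move=> H1 H2.
have H : (n.+1 <= #|S| * 2)%N by rewrite H1 add1n ltnS.
 move: H; set k := #|S|; lia.
Qed.
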